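(* Let $p \ge 1$ be an integer, let $u_L \neq u_R$ be real numbers, let $c \neq 0$ be a real constant, and let $S:\mathbb{R}\to\mathbb{R}$ be a measurable function. For each grid spacing $h>0$ define the width $w_h = c\,h^{p/(p+1)}$ and the profile $$u_h(z) = \frac{u_L+u_R}{2} + \frac{u_R-u_L}{2}\, S\!\left(\frac{z}{w_h}\right), \qquad z \in \mathbb{R}.$$ For $\rho>0$ set $I(\rho) = \int_{-\infty}^{\infty} \left| S(\chi) - S(\rho\chi)\right|\,d\chi$. Let $h_1>0$ and $0<r<1$, and set $h_2 = r h_1$, $h_3 = r^2 h_1$. Assume $0 < I(r^{-p/(p+1)}) < \infty$. Then, with $\|\cdot\|$ the $L_1(\mathbb{R})$ norm, $$\frac{\|u_{h_1}-u_{h_2}\|}{\|u_{h_2}-u_{h_3}\|} = \left(\frac{h_1}{h_2}\right)^{p/(p+1)} = r^{-p/(p+1)},$$ and consequently $\sigma = p/(p+1)$ is the unique real $\sigma \neq 0$ satisfying $$\frac{\|u_{h_1}-u_{h_2}\|}{\|u_{h_2}-u_{h_3}\|} = \frac{|h_1^\sigma - h_2^\sigma|}{|h_2^\sigma - h_3^\sigma|}.$$ That is, the Richardson-extrapolation convergence-rate estimate $\mathcal{R}(u_{h_1},u_{rh_1},u_{r^2h_1})$ equals $p/(p+1)$, independently of the profile $S$.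
   Context: Setting: linear advection $u_t + a u_x = 0$ with jump initial data ($u=u_L$ for $x<0$, $u=u_R$ for $x\ge 0$), approximated by a (noncompressive, stable) $p$-th order scheme with grid spacing $h$. The scheme's modified equation, truncated and written in the moving frame $z = x - at$, is $U_\tau - \kappa_h U_{zzz\cdots}=0$ (a $(p+1)$-st $z$-derivative) with $\kappa_h = \tilde\kappa h^p$, whose solution at the final time $t_f$ is self-similar in $\xi_h = z/(\kappa_h t_f)^{1/(p+1)}$; this gives the form $u_h(z)=\frac{u_L+u_R}{2}+\frac{u_R-u_L}{2}S(\xi_h)$ with $w_h=(\tilde\kappa t_f)^{1/(p+1)} h^{p/(p+1)}$ (real $(p+1)$-th root), which is taken as the model of the numerical solution at resolution $h$. Richardson convergence-rate estimate: for three approximations $u_{h_1},u_{h_2},u_{h_3}$, $\mathcal{R}(u_{h_1},u_{h_2},u_{h_3})$ denotes the solution $\sigma$ of $\frac{\|u_{h_1}-u_{h_2}\|}{\|u_{h_2}-u_{h_3}\|} = \frac{|h_1^\sigma-h_2^\sigma|}{|h_2^\sigma-h_3^\sigma|}$, where $\|\cdot\|$ is the $L_1$ norm. *)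

(* Defs.v *)
From HB Require Import structures.
From mathcomp Require Import all_boot all_order all_algebra.
From mathcomp Require Import all_classical all_reals all_analysis.
Set Implicit Arguments. Unset Strict Implicit. Unset Printing Implicit Defensive.
Import Order.TTheory GRing.Theory Num.Theory.
Import numFieldNormedType.Exports.
Local Open Scope classical_set_scope.
Local Open Scope ring_scope.

Definition rate {R : realType} (p : nat) : R := p%:R / p.+1%:R.

Definition width {R : realType} (p : nat) (c h : R) : R := c * h `^ rate p.

Definition uh {R : realType} (p : nat) (uL uR c : R) (S : R -> R) (h z : R) : R :=
  (uL + uR) / 2 + (uR - uL) / 2 * S (z / width p c h).

Definition L1dist {R : realType} (f g : R -> R) : \bar R :=
  (\int[@lebesgue_measure R]_(x in [set: R]) (`|f x - g x|)%:E)%E.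

Definition Iprof {R : realType} (S : R -> R) (rho : R) : \bar R :=
  (\int[@lebesgue_measure R]_(x in [set: R]) (`|S x - S (rho * x)|)%:E)%E.

(* Main.v *)
Require Import Defs.
From HB Require Import structures.
From mathcomp Require Import all_boot all_order all_algebra.
From mathcomp Require Import all_classical all_reals all_analysis.
From mathcomp Require Import ring lra measurable_realfun.
Import Order.TTheory GRing.Theory Num.Theory.
Import numFieldNormedType.Exports.
Local Open Scope classical_set_scope.
Local Open Scope ring_scope.

Section S.
Context {R : realType}.
Variable w : R.
Hypothesis w0 : w != 0.
Let phi (x : R) : R := x / w.
Let mphi : measurable_fun [set: measurableTypeR R] (phi : measurableTypeR R -> measurableTypeR R).
Proof. exact: measurable_realfun.mulrr_measurable. Qed.
Let pm : {measure set (measurableTypeR R) -> \bar R} :=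
  @measure_function_pushforward__canonical__measure_function_Measure _ _ (measurableTypeR R) (measurableTypeR R) R lebesgue_measure phi mphi.
Let k : {nonneg R} := (`|w|^-1)%:nng.

Let itv_eq (a b : R) : (lebesgue_measure (phi @^-1` `]a, b]) =
   (`|w|)%:E * lebesgue_measure `]a, b]%classic)%E.
Proof.
rewrite !lebesgue_measure_itv /=.
have [wp|wn] := ltP 0 w.
  have -> : phi @^-1` `]a, b] = `]a * w, b * w]%classic.
    apply/seteqP; split => x /=; rewrite !in_itv /= /phi.
      by rewrite ltr_pdivlMr // ler_pdivrMr.
    by rewrite ltr_pdivlMr // ler_pdivrMr.
  rewrite lebesgue_measure_itv /= !lte_fin ltr_pM2r // gtr0_norm //.
  case: ifP => _; last by rewrite mule0.
  by rewrite -EFinD -EFinD -EFinM; congr (_%:E); lra.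
have wn' : w < 0 by rewrite lt_neqAle w0.
have -> : phi @^-1` `]a, b] = `[b * w, a * w[%classic.
  apply/seteqP; split => x /=; rewrite !in_itv /= /phi.
    by rewrite ltr_ndivlMr // ler_ndivrMr // => /andP[-> ->].
  by rewrite ltr_ndivlMr // ler_ndivrMr // => /andP[-> ->].
rewrite lebesgue_measure_itv /= !lte_fin ltr_nM2r // ltr0_norm //.
case: ifP => _; last by rewrite mule0.
by rewrite -EFinD -EFinD -EFinM; congr (_%:E); lra.
Qed.

Let meq (A : set (measurableTypeR R)) : measurable A ->
  lebesgue_measure A = mscale k pm A.
Proof.
move=> mA; have := @lebesgue_measure_unique R (mscale k pm).
move=> H; apply: H => //. move=> X [[a b] _ <-{X}].
transitivity ((`|w|^-1)%:E * lebesgue_measure (phi @^-1` `]a, b]%classic))%E; last first.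
  by [].
rewrite itv_eq muleA -EFinM mulVf ?normr_eq0 //.
by rewrite mul1e.
Qed.

Lemma integral_scale (g : R -> R) : measurable_fun setT g -> (forall x, 0 <= g x) ->
  (\int[lebesgue_measure]_(x in [set: R]) (g (x / w))%:E =
  (`|w|)%:E * \int[lebesgue_measure]_(x in [set: R]) (g x)%:E)%E.
Proof.
move=> mg g0.
rewrite [X in (_ = _ * X)%E](eq_measure_integral (mscale k pm)); last first.
  by move=> A mA _; apply: meq.
rewrite ge0_integral_mscale //; last 2 first.
- exact/measurable_EFinP.
- by move=> x _; rewrite lee_fin.
rewrite /= (ge0_integral_pushforward mphi) //; last 2 first.
- exact/measurable_EFinP.
- by move=> x _; rewrite lee_fin.
rewrite preimage_setT /= muleA -EFinM mulfV ?normr_eq0 // mul1e.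
done.
Qed.
End S.

Lemma width_scale {R : realType} p (c r h : R) : 0 <= r -> 0 <= h ->
  width p c (r * h) = r `^ rate p * width p c h.
Proof. by move=> r0 h0; rewrite /width powRM // mulrCA. Qed.

Lemma key {R : realType} p (uL uR c : R) (S : R -> R) (r h : R) :
  measurable_fun [set: R] S -> 0 < r -> 0 < h -> c != 0 ->
  L1dist (uh p uL uR c S h) (uh p uL uR c S (r * h)) =
  ((`|(uR - uL) / 2| * `|width p c h|)%:E * Iprof S (r `^ (- rate p)))%E.
Proof.
move=> mS r0 h0 c0.
set w := width p c h.
have w0 : w != 0 by rewrite /w /width mulf_neq0 // gt_eqF // powR_gt0.
set g := fun y : R => `|S y - S (r `^ (- rate p) * y)|.
have mg : measurable_fun setT g.
  apply: measurableT_comp; first exact: normr_measurable.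
  apply: measurable_funB => //.
  apply: measurableT_comp => //; exact: mulrl_measurable.
rewrite /L1dist.
under eq_integral => x _.
  have -> : `|uh p uL uR c S h x - uh p uL uR c S (r * h) x| = `|(uR - uL) / 2| * g (x / w).
    rewrite /uh width_scale ?ltW // -/w /g -normrM; congr `|_|.
    have -> : x / (r `^ rate p * w) = (r `^ rate p)^-1 * (x / w).
      by rewrite invfM mulrCA.
    rewrite powRN; ring.
  over.
under eq_integral do rewrite EFinM.
have mgw : measurable_fun [set: R] (fun x => (g (x / w))%:E).
  apply: measurableT_comp; first exact: EFin_measurable.
  apply: measurableT_comp => //; exact: measurable_realfun.mulrr_measurable.
have gw0 : forall x, [set: R] x -> (0 <= (g (x / w))%:E)%E by move=> x _; rewrite lee_fin /g normr_ge0.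
rewrite /= ge0_integralZl_EFin //.
rewrite (@integral_scale _ w w0 g) //; last by move=> x; rewrite /g.
by rewrite muleA -EFinM.
Qed.

Lemma rate_gt0 {R : realType} p : (1 <= p)%N -> 0 < rate p :> R.
Proof. by move=> hp; rewrite /rate divr_gt0 // ltr0n. Qed.

Lemma ratio_sigma {R : realType} (h1 r sigma : R) : 0 < h1 -> 0 < r -> r < 1 -> sigma != 0 ->
  `|h1 `^ sigma - (r * h1) `^ sigma| / `|(r * h1) `^ sigma - (r ^+ 2 * h1) `^ sigma|
  = r `^ (- sigma).
Proof.
move=> h0 r0 r1 s0.
have -> : r ^+ 2 * h1 = r * (r * h1) by rewrite mulrA -expr2.
rewrite !powRM ?mulr_ge0 ?ltW //.
set q := r `^ sigma; set H := h1 `^ sigma.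
have q0 : 0 < q by rewrite powR_gt0.
have H0 : 0 < H by rewrite powR_gt0.
have q1 : 1 - q != 0.
  rewrite subr_eq0 eq_sym powR_eq1 negb_or negb_or s0 (lt_eqF r1) /= andbT.
  by rewrite -leNgt ltW.
rewrite powRN -/q.
have -> : H - q * H = H * (1 - q) by ring.
have -> : q * H - q * (q * H) = q * H * (1 - q) by ring.
rewrite !normrM (gtr0_norm q0) (gtr0_norm H0).
have : `|1 - q| != 0 by rewrite normr_eq0.
move=> n0; field.
by rewrite n0 (gt_eqF q0) (gt_eqF H0).
Qed.

Lemma powR_neg_inj {R : realType} (r a s : R) : 0 < r -> r < 1 ->
  r `^ (- a) = r `^ (- s) -> s = a.
Proof.
move=> r0 r1 /(congr1 (@ln R)); rewrite !ln_powR => /eqP.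
have lr : ln r != 0 by rewrite lt_eqF // ln_lt0 // r0 r1.
rewrite (inj_eq (mulIf lr)) eqr_opp => /eqP ->; done.
Qed.

Theorem mainTheorem1 (R : realType) (p : nat) (uL uR c : R) (S : R -> R)
    (h1 r : R) :
  (1 <= p)%N -> uL != uR -> c != 0 -> measurable_fun [set: R] S ->
  0 < h1 -> 0 < r -> r < 1 ->
  (0 < Iprof S (r `^ (- rate p)))%E -> (Iprof S (r `^ (- rate p)) < +oo)%E ->
  let h2 := r * h1 in
  let h3 := r ^+ 2 * h1 in
  let N1 := L1dist (uh p uL uR c S h1) (uh p uL uR c S h2) in
  let N2 := L1dist (uh p uL uR c S h2) (uh p uL uR c S h3) in
  [/\ (0 < N1 < +oo)%E, (0 < N2 < +oo)%E,
      fine N1 / fine N2 = (h1 / h2) `^ rate p,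
      fine N1 / fine N2 = r `^ (- rate p) &
      forall sigma : R, sigma != 0 ->
        (fine N1 / fine N2
           = `|h1 `^ sigma - h2 `^ sigma| / `|h2 `^ sigma - h3 `^ sigma|
         <-> sigma = rate p)].
Proof.
move=> hp hLR hc mS h0 r0 r1 Ip If h2 h3 N1 N2.
have ha : 0 < rate p :> R by exact: rate_gt0.
set I := Iprof S (r `^ (- rate p)) in Ip If.
have Ifin : I \is a fin_num by rewrite ge0_fin_numE // ltW.
set i := fine I.
have IE : I = i%:E by rewrite fineK.
have i0 : 0 < i by rewrite -lte_fin -IE.
set K := `|(uR - uL) / 2|.
have K0 : 0 < K by rewrite normr_gt0 mulf_neq0 // ?subr_eq0 1?eq_sym // invr_eq0 pnatr_eq0.
set W := `|width p c h1|.
have W0 : 0 < W by rewrite normr_gt0 /width mulf_neq0 // gt_eqF // powR_gt0.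
have hN1 : N1 = (K * W * i)%:E.
  by rewrite /N1 /h2 key // -/I IE -EFinM.
have hN2 : N2 = (K * (r `^ rate p * W) * i)%:E.
  rewrite /N2 /h3 /h2 (_ : r ^+ 2 * h1 = r * (r * h1)); last by rewrite mulrA -expr2.
  rewrite key ?mulr_gt0 // -/I IE -EFinM width_scale ?ltW // (normrM (r `^ rate p)).
  by rewrite (ger0_norm (powR_ge0 _ _)).
have ra0 : 0 < r `^ rate p by rewrite powR_gt0.
have ratio : fine N1 / fine N2 = r `^ (- rate p).
  rewrite hN1 hN2 /= powRN; field.
  by rewrite !gt_eqF.
split => //.
- by rewrite hN1 lte_fin ltry !mulr_gt0.
- by rewrite hN2 lte_fin ltry !mulr_gt0.
- rewrite ratio /h2 invfM mulrCA mulfV ?gt_eqF // mulr1.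
  by rewrite -powR_inv1 ?ltW // -powRrM mulN1r.
- move=> sigma s0; rewrite ratio /h2 /h3 ratio_sigma //; split.
    exact: powR_neg_inj.
  by move=> ->.
Qed.
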